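(* Let $\mathbf L=(L,\vee,\wedge,0,1)$ be a complemented lattice with $0\ne1$ and $D$ a compatible deductive system of $\mathbf L$. Then: (i) $\Theta(D)$ is an equivalence relation on $L$ having the Substitution Property with respect to $\to$; (ii) $[1]\big(\Theta(D)\big)=D$.
   Context: For $a\in L$, $a^+:=\{x\in L\mid a\vee x=1,\ a\wedge x=0\}$ (the set of all complements of $a$), and $a\to b:=\{x\vee(a\wedge b)\mid x\in a^+\}$; for $A\subseteq L$, $a\to A:=\bigcup_{y\in A}(a\to y)$. A deductive system of $\mathbf L$ is a subset $D\subseteq L$ such that $1\in D$, and whenever $a\in D$, $b\in L$ and $a\to b\subseteq D$, then $b\in D$. A deductive system $D$ is compatible if for all $a,b,c,d\in L$: (1) if $a\to b\subseteq D$ and $x\to(c\to d)\subseteq D$ for all $x\in a\to b$, then $c\to d\subseteq D$; (2) if $a\to b\subseteq D$ and $b\to a\subseteq D$, then $x\to(b\to c)\subseteq D$ for all $x\in a\to c$. $\Theta(D):=\{(x,y)\in L^2\mid x\to y\subseteq D\text{ and }y\to x\subseteq D\}$. An equivalence relation $\Phi$ on $L$ has the Substitution Property with respect to $\to$ if $(a,b)\in\Phi$ implies $(a\to c)\times(b\to c)\subseteq\Phi$ for all $c\in L$. $[1]\Phi$ is the $\Phi$-class of $1$. *)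

(* Defs.v *)
From HB Require Import structures.
From mathcomp Require Import all_boot all_order.
Set Implicit Arguments. Unset Strict Implicit. Unset Printing Implicit Defensive.
Import Order.TTheory.
Local Open Scope order_scope.

Section Defs.
Context {disp : Order.disp_t} {L : tbLatticeType disp}.

Definition compls (a : L) : L -> Prop := fun x => (a `|` x = \top) /\ (a `&` x = \bot).

(* a -> b := { x \/ (a /\ b) | x in a^+ } *)
Definition arr (a b : L) : L -> Prop :=
  fun z => exists x, compls a x /\ z = x `|` (a `&` b).

Definition arrS (a : L) (A : L -> Prop) : L -> Prop :=
  fun z => exists y, A y /\ arr a y z.

Definition subset (A B : L -> Prop) : Prop := forall x, A x -> B x.

Definition complemented : Prop := forall a : L, exists x, compls a x.

Definition deductive_system (D : L -> Prop) : Prop :=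
  D \top /\ forall a b : L, D a -> subset (arr a b) D -> D b.

Definition compatible (D : L -> Prop) : Prop :=
  deductive_system D /\
  (forall a b c d : L, subset (arr a b) D ->
     (forall x, arr a b x -> subset (arrS x (arr c d)) D) ->
     subset (arr c d) D) /\
  (forall a b c : L, subset (arr a b) D -> subset (arr b a) D ->
     forall x, arr a c x -> subset (arrS x (arr b c)) D).

Definition ThetaD (D : L -> Prop) : L -> L -> Prop :=
  fun x y => subset (arr x y) D /\ subset (arr y x) D.

Definition equiv_relP (R : L -> L -> Prop) : Prop :=
  (forall x, R x x) /\ (forall x y, R x y -> R y x) /\
  (forall x y z, R x y -> R y z -> R x z).

Definition substitution_arr (R : L -> L -> Prop) : Prop :=
  forall a b c : L, R a b -> forall u v, arr a c u -> arr b c v -> R u v.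

Definition class_top (R : L -> L -> Prop) : L -> Prop := fun x => R x \top.

End Defs.

(* Main.v *)
Require Import Defs.
From HB Require Import structures.
From mathcomp Require Import all_boot all_order.
Import Order.TTheory.
Local Open Scope order_scope.

Theorem theorem7 (disp : Order.disp_t) (L : tbLatticeType disp)
  (hcomp : @complemented disp L) (h01 : (\bot : L) <> \top)
  (D : L -> Prop) (hD : compatible D) :
  (equiv_relP (ThetaD D) /\ substitution_arr (ThetaD D)) /\
  (forall x : L, class_top (ThetaD D) x <-> D x).
Proof.
have arrx1 : forall x z : L, arr x \top z -> z = \top.
  move=> x z [c [[h1 h2] ->]]. by rewrite (meet_l (lex1 x)) joinC.
have arr1x : forall x z : L, arr \top x z <-> z = x.
  move=> x z; split.
    move=> [c [[h1 h2] ->]].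
    have -> : c = \bot by rewrite -h2 meet_r // lex1.
    by rewrite join_r ?le0x // meet_r // lex1.
  move=> ->; exists \bot; split; first split.
  - by rewrite join_l // le0x.
  - by rewrite meet_r // le0x.
  by rewrite join_r ?le0x // meet_r // lex1.
have arrxx : forall x z : L, arr x x z -> z = \top.
  move=> x z [c [[h1 h2] ->]]. by rewrite meetxx joinC.
case: hD => [[D1 Dmp] [C1 C2]].
split; first split.
- split; first by move=> x; split => z /arrxx ->.
  split; first by move=> x y [h1 h2]; split.
  move=> x y z [hxy hyx] [hyz hzy]; split.
  + apply: (C1 y z x z hyz) => w hw.
    exact: (C2 y x z hyx hxy w hw).
  + apply: (C1 y x z x hyx) => w hw.
    exact: (C2 y z x hyz hzy w hw).
- move=> a b c [hab hba] u v hu hv; split.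
  + move=> z hz. apply: (C2 a b c hab hba u hu); exists v; split => //.
  + move=> z hz. apply: (C2 b a c hba hab v hv); exists u; split => //.
- move=> x; split.
  + move=> [_ h]; apply: h; exact/arr1x.
  + move=> Dx; split; first by move=> z /arrx1 ->.
    by move=> z /arr1x ->.
Qed.
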